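(* Assume that the decision rule $\phi_n$ has pointwise asymptotic level for $H^{\mathcal{I}}_{0,S}$ for all minimally invariant sets $S$ and pointwise asymptotic power for all $S\subseteq[d]$ such that $S$ is not a superset of a minimally invariant set. Define $C:=2^d$, let $$\widehat{\mathcal{I}}:=\{S\subseteq[d]\mid \phi_n(S,\alpha C^{-1})=0\},\qquad \widehat{\mathcal{MI}}:=\{S\in\widehat{\mathcal{I}}\mid \forall S'\subsetneq S:\ S'\notin\widehat{\mathcal{I}}\},$$ and $\hat S_{\mathrm{IAS}}:=\bigcup_{S\in\widehat{\mathcal{MI}}}S$. Then $$\lim_{n\to\infty}\mathbb{P}(\hat S_{\mathrm{IAS}}\subseteq\mathrm{AN}_Y)\ \ge\ \lim_{n\to\infty}\mathbb{P}(\hat S_{\mathrm{IAS}}=S_{\mathrm{IAS}})\ \ge\ 1-\alpha.$$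
   Context: Data $\mathcal{D}_n$ are observations (not necessarily independent) from the distribution $\mathbb{P}$ of $(E,X,Y)$, $X=(X_1,\dots,X_d)$, generated by a structural causal model whose graph is a DAG, faithful to that DAG, with $E$ exogenous (no parents). $\mathrm{AN}_Y$ denotes the set of ancestors of $Y$ in the DAG (indices $j\in[d]$ identified with $X_j$). $S\subseteq[d]$ is invariant if $Y\perp\!\!\!\perp E\mid X_S$; $\mathcal{I}$ is the collection of invariant sets; $S$ is minimally invariant if $S\in\mathcal{I}$ and no proper subset of $S$ is in $\mathcal{I}$; $S_{\mathrm{IAS}}$ is the union of all minimally invariant sets (empty if there are none). $H^{\mathcal{I}}_{0,S}$ is the hypothesis $S\in\mathcal{I}$. A decision rule $\phi_n(S,\alpha)=\phi_n(S,\mathcal{D}_n,\alpha)\in\{0,1\}$ rejects $H^{\mathcal{I}}_{0,S}$ at level $\alpha$ when it equals $1$. Pointwise asymptotic level for $S$ means: for all $\alpha\in(0,1)$ and all distributions in the model class for which $S\in\mathcal{I}$, $\lim_{n}\mathbb{P}(\phi_n(S,\alpha)=1)\le\alpha$; pointwise asymptotic power for $S$ means: for all $\alpha\in(0,1)$ and all distributions in the model class for which $S\notin\mathcal{I}$, $\lim_n\mathbb{P}(\phi_n(S,\alpha)=1)=1$. *)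

(* Defs.v *)
From HB Require Import structures.
From mathcomp Require Import all_boot all_order all_algebra.
From mathcomp Require Import all_classical all_reals all_analysis.
Set Implicit Arguments. Unset Strict Implicit. Unset Printing Implicit Defensive.
Import Order.TTheory GRing.Theory Num.Theory.
Local Open Scope classical_set_scope.
Local Open Scope ring_scope.

(* Nodes of the causal graph over (E, X_1..X_d, Y): type 'I_d.+2 with
   E = 0, X_j = j+1 (j : 'I_d, 0-based), Y = d+1. *)
Definition node (d : nat) := 'I_d.+2.
Definition nodeE (d : nat) : node d := ord0.
Definition nodeY (d : nat) : node d := ord_max.
Definition nodeX (d : nat) (j : 'I_d) : node d := lift ord0 (widen_ord (leqnSn d) j).

(* G u v == there is a directed edge u -> v. *)
Definition is_DAG (d : nat) (G : rel (node d)) : Prop :=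
  forall u v, G u v -> ~~ connect G v u.

Definition exogenousE (d : nat) (G : rel (node d)) : Prop :=
  forall v, ~~ G v (nodeE d).

Definition AN_Y (d : nat) (G : rel (node d)) : {set 'I_d} :=
  [set j : 'I_d | connect G (nodeX j) (nodeY d)].

Definition d_connecting_path (d : nat) (G : rel (node d)) (a b : node d)
  (Z : {set node d}) (p : seq (node d)) : Prop :=
  let s := a :: p in
  [/\ last a p = b, uniq s, path (fun u v => G u v || G v u) a p &
   forall i : nat, (0 < i)%N -> (i.+1 < size s)%N ->
     let u := nth a s i.-1 in let w := nth a s i in let v := nth a s i.+1 in
     if G u w && G v w
     then (exists2 z, z \in Z & connect G w z)
     else w \notin Z].

Definition d_separated (d : nat) (G : rel (node d)) (a b : node d)
  (Z : {set node d}) : Prop :=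
  ~ exists p, d_connecting_path G a b Z p.

Section CI.
Context {R : realType} {dO : measure_display} {Omega : measurableType dO}.

Definition sigma_gen (d : nat) (V : node d -> Omega -> R) (J : {set node d})
  : set (set Omega) :=
  <<s [set A | exists j, exists2 B : set R,
          j \in J /\ measurable B & A = V j @^-1` B] >>.

(* Conditional independence  V a _||_ V b | (V z)_{z in Z}:
   for every Borel A, P(V a \in A | V b, V_Z) admits a sigma(V_Z)-measurable
   version (with values in [0,1]). *)
Definition cond_indep (P : probability Omega R) (d : nat)
  (V : node d -> Omega -> R) (a b : node d) (Z : {set node d}) : Prop :=
  forall A : set R, measurable A ->
  exists psi : Omega -> R,
    [/\ forall B : set R, measurable B -> sigma_gen V Z (psi @^-1` B),
        forall w, 0 <= psi w <= 1 &
        forall C, sigma_gen V (b |: Z) C ->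
          P (C `&` V a @^-1` A) = (\int[P]_(w in C) (psi w)%:E)%E].

Definition invariant (P : probability Omega R) (d : nat)
  (V : node d -> Omega -> R) (S : {set 'I_d}) : Prop :=
  cond_indep P V (nodeY d) (nodeE d) ((@nodeX d) @: S).

Definition min_invariant (P : probability Omega R) (d : nat)
  (V : node d -> Omega -> R) (S : {set 'I_d}) : Prop :=
  invariant P V S /\ forall S' : {set 'I_d}, S' \proper S -> ~ invariant P V S'.

Definition S_IAS (P : probability Omega R) (d : nat)
  (V : node d -> Omega -> R) : {set 'I_d} :=
  [set j : 'I_d | `[< exists S, min_invariant P V S /\ j \in S >]].

Definition markov_wrt (P : probability Omega R) (d : nat)
  (V : node d -> Omega -> R) (G : rel (node d)) : Prop :=
  forall (a b : node d) (Z : {set node d}), a != b -> a \notin Z -> b \notin Z ->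
    d_separated G a b Z -> cond_indep P V a b Z.

Definition faithful_wrt (P : probability Omega R) (d : nat)
  (V : node d -> Omega -> R) (G : rel (node d)) : Prop :=
  forall (a b : node d) (Z : {set node d}), a != b -> a \notin Z -> b \notin Z ->
    cond_indep P V a b Z -> d_separated G a b Z.
End CI.

Section Est.
Context {R : realType} {dO : measure_display} {Omega : measurableType dO}.
Variable d : nat.
(* phi n S a w == phi_n(S, D_n(w), a) = 1, i.e. H_{0,S} rejected at level a. *)
Variable phi : nat -> {set 'I_d} -> R -> Omega -> bool.

Definition I_hat (n : nat) (alpha : R) (w : Omega) : {set {set 'I_d}} :=
  [set S : {set 'I_d} | ~~ phi n S (alpha / (2 ^+ d)%:R) w].

Definition MI_hat (n : nat) (alpha : R) (w : Omega) : {set {set 'I_d}} :=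
  [set S in I_hat n alpha w |
     [forall S' : {set 'I_d}, (S' \proper S) ==> (S' \notin I_hat n alpha w)]].

Definition S_IAS_hat (n : nat) (alpha : R) (w : Omega) : {set 'I_d} :=
  \bigcup_(S in MI_hat n alpha w) S.
End Est.

(* Main.v *)
Require Import Defs.
From HB Require Import structures.
From mathcomp Require Import all_boot all_order all_algebra.
From mathcomp Require Import all_classical all_reals all_analysis.
From Stdlib Require Import Lia.
From mathcomp Require Import zify ring lra.
Import Order.TTheory GRing.Theory Num.Theory.
Local Open Scope classical_set_scope.

Lemma Y_neq_E d : nodeY d != nodeE d.
Proof. by []. Qed.

Lemma X_neq_E d (j : 'I_d) : nodeX j != nodeE d.
Proof. by rewrite eq_sym; exact: neq_lift. Qed.

Lemma X_neq_Y d (j : 'I_d) : nodeX j != nodeY d.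
Proof.
apply/eqP => /(congr1 val) /=; rewrite /bump /= => h.
by have := ltn_ord j; lia.
Qed.

Lemma connect_to_E d (G : rel (node d)) : exogenousE G ->
  forall x, connect G x (nodeE d) -> x = nodeE d.
Proof.
move=> HE x /connectP [p Hp Ep]; move: Hp Ep; case/lastP: p => [//|q z].
rewrite rcons_path last_rcons => /andP [_ Hz] Ez; have := HE (last x q); by rewrite Ez Hz.
Qed.

Lemma dconn_transfer d (G : rel (node d)) (HE : exogenousE G) (S : {set 'I_d}) p :
  d_connecting_path G (nodeY d) (nodeE d) ((@nodeX d) @: (S :&: AN_Y G)) p ->
  d_connecting_path G (nodeY d) (nodeE d) ((@nodeX d) @: S) p.
Proof.
case=> Hlast Huniq Hpath Hcoll; split => // i i0 isz.
set s := nodeY d :: p.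
have Es : size s = (size p).+1 by [].
have isz2 : (i.+1 < (size p).+1)%N by [].
pose good x := connect G x (nodeY d) || connect G x (nodeE d).
have goodE : forall x y, G x y -> good y -> good x.
  move=> x y Gxy /orP [] h; apply/orP; [left|right];
  exact: connect_trans (connect1 Gxy) h.
have sub : (@nodeX d) @: (S :&: AN_Y G) \subset (@nodeX d) @: S.
  by apply: imsetS; apply: subsetIl.
have collgood : forall w, (exists2 z, z \in (@nodeX d) @: (S :&: AN_Y G) & connect G w z) -> good w.
  move=> w [z /imsetP [j]]; rewrite inE => /andP [_]; rewrite inE => jA -> wz.
  by apply/orP; left; exact: connect_trans wz jA.
have adj : forall k, k.+1 < size s -> G (nth (nodeY d) s k) (nth (nodeY d) s k.+1) || G (nth (nodeY d) s k.+1) (nth (nodeY d) s k).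
  move=> k kl; move/(pathP (nodeY d)): Hpath => /(_ k kl) //.
have goodY : good (nth (nodeY d) s 0) by rewrite /good /= connect0.
have goodlast : good (nth (nodeY d) s (size s).-1).
  by rewrite nth_last /s /= Hlast /good connect0 orbT.
have inter : forall k, 0 < k -> k.+1 < size s ->
   good (nth (nodeY d) s k) \/
   ~~ (G (nth (nodeY d) s k.-1) (nth (nodeY d) s k) && G (nth (nodeY d) s k.+1) (nth (nodeY d) s k)).
  move=> k k0 ks; have := Hcoll k k0 ks => /=; case: ifP => // _ h.
    by left; apply: collgood.
  by right.
have Rgood : forall k i, i.+2 + k = size s -> G (nth (nodeY d) s i) (nth (nodeY d) s i.+1) -> good (nth (nodeY d) s i).
  elim=> [|k IH] j.
    rewrite addn0 => hs Gj; apply: (goodE _ _ Gj).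
    by move: goodlast; rewrite -hs.
  move=> hs Gj; apply: (goodE _ _ Gj).
  have h1 : j.+2 < size s by lia.
  have [//|] := inter j.+1 isT h1.
  rewrite /= Gj /= => nG.
  have := adj j.+1 h1; rewrite (negbTE nG) orbF.
  by apply: IH; lia.
have Lgood : forall i, 0 < i -> i < size s -> G (nth (nodeY d) s i) (nth (nodeY d) s i.-1) -> good (nth (nodeY d) s i).
  elim=> [//|k IH] _ ks Gk; apply: (goodE _ _ Gk) => /=.
  case: k IH ks Gk => [|k] IH ks Gk; first exact: goodY.
  have [//|] := inter k.+1 isT ks.
  rewrite Gk andbT => nG.
  have h1 : k.+1 < size s by lia.
  rewrite /= in nG.
  have := adj k h1; rewrite (negbTE nG) /= => G2.
  by apply: IH.
have := Hcoll i i0 isz => /=; case: ifP => Hc.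
  move=> [z zin wz]; exists z => //; exact: (fintype.subsetP sub _ zin).
move=> Hn; apply/negP => /imsetP [j jS Hj].
have gw : good (nth (nodeY d) s i).
  move/negbT: Hc; rewrite negb_and => /orP [] nG.
    have h1 : i < size s by lia.
    have h2 : i.-1.+1 < size s by lia.
    apply: Lgood => //.
    have := adj i.-1 h2; rewrite (prednK i0) (negbTE nG) /=.
    by [].
  have h1 : i.+2 + (size s - i.+2) = size s by lia.
  apply: (Rgood (size s - i.+2)); first exact: h1.
  by have := adj i isz; rewrite (negbTE nG) orbF.
move: gw; rewrite /good Hj => /orP [] h.
  by move: Hn; rewrite Hj => /negP; apply; apply/imsetP; exists j => //; rewrite !inE jS /=.
by have := @connect_to_E _ _ HE _ h; apply/eqP; exact: X_neq_E.
Qed.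

Local Open Scope ring_scope.
Section Aux.
Context {R : realType}.
Local Open Scope ereal_scope.

Lemma einf_ge (u : (\bar R)^nat) (x : \bar R) :
  (\forall n \near \oo, x <= u n) -> x <= limn_einf u.
Proof.
move=> [N _ HN]; rewrite limn_einf_lim; apply: lime_ge; first exact: is_cvg_einfs.
exists N => // n /= Nn; apply: le_ereal_inf_tmp => _ [m /= nm <-].
apply: HN => /=; exact: leq_trans Nn nm.
Qed.

Lemma einf_mono (u v : (\bar R)^nat) :
  (forall n, u n <= v n) -> limn_einf u <= limn_einf v.
Proof.
move=> uv; rewrite !limn_einf_lim; apply: lee_lim; try exact: is_cvg_einfs.
apply: nearW => n; apply: le_ereal_inf_tmp => _ [m /= nm <-].
apply: le_trans (uv m); apply: ereal_inf_lbound; by exists m.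
Qed.

Lemma esup_ev (u : (\bar R)^nat) (a e : R) :
  limn_esup u <= a%:E -> (0 < e)%R -> \forall n \near \oo, u n <= (a + e)%:E.
Proof.
move=> ua e0; have : ereal_inf (range (esups u)) < (a + e)%:E.
  rewrite -(cvg_lim _ (@cvg_esups_inf R u)) // -limn_esup_lim.
  apply: le_lt_trans ua _; rewrite lte_fin; lra.
move=> /ereal_inf_lt [_ [N _ <-] HN]; exists N => // n /= Nn.
apply: le_trans (ltW HN); apply: ereal_sup_ubound; by exists n.
Qed.

End Aux.

Lemma card_sets d : #|{set 'I_d}| = (2 ^ d)%N.
Proof.
transitivity #|powerset [set: 'I_d]|; last by rewrite card_powerset cardsT card_ord.
apply: eq_card => A. by rewrite powersetE finset.subsetT.
Qed.

Lemma natN (R : realType) d : ((2 ^+ d)%:R : R) = (#|{set 'I_d}|)%:R.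
Proof. by rewrite card_sets natrXE. Qed.

Lemma boole_seq d1 (Omega : measurableType d1) (R : realType) (Q : probability Omega R)
  (I : Type) (r : seq I) (F : I -> set Omega) :
  (forall i, measurable (F i)) ->
  (Q (\big[setU/set0]_(i <- r) F i) <= \sum_(i <- r) Q (F i))%E.
Proof.
move=> mF; elim: r => [|i r IH]; first by rewrite !big_nil measure0.
rewrite !big_cons; apply: le_trans (measureU2 Q (mF i) _) _.
  exact: bigsetU_measurable.
exact: leeD2l.
Qed.

Lemma meas_ffun d1 (Omega : measurableType d1) (I : finType)
  (g : Omega -> {ffun I -> bool}) (F : pred {ffun I -> bool}) :
  (forall i, measurable [set w | g w i]) -> measurable [set w | F (g w)].
Proof.
move=> mg.
have -> : [set w | F (g w)] =
  \bigcup_(f in [set f | F f]) \bigcap_(i in [set: I]) [set w | g w i = f i].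
  apply/seteqP; split => [w Fw | w [f Ff Hf]].
    by exists (g w) => //.
  rewrite /=; have -> : g w = f by apply/ffunP => i; exact: Hf.
  exact: Ff.
apply: fin_bigcup_measurable; first exact: finite_finset.
move=> f _; apply: fin_bigcap_measurable; first exact: finite_finset.
move=> i _; case: (f i); first exact: mg.
rewrite (_ : [set w | g w i = false] = ~` [set w | g w i]); first exact/measurableC/mg.
apply/seteqP; split => w /=; case: (g w i) => //.
Qed.

Lemma minv_sub_AN (R : realType) d0 (Omega0 : measurableType d0) (P : probability Omega0 R)
  d (V : node d -> Omega0 -> R) (G : rel (node d)) (HE : exogenousE G)
  (Hm : markov_wrt P V G) (Hf : faithful_wrt P V G) (S : {set 'I_d}) :
  min_invariant P V S -> S \subset AN_Y G.
Proof.
move=> [invS minS].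
have nY : forall T : {set 'I_d}, nodeY d \notin (@nodeX d) @: T.
  move=> T; apply/imsetP => -[j _ Hj].
  have := congr1 val Hj; rewrite /= /bump /= => h.
  by have := ltn_ord j; lia.
have nE : forall T : {set 'I_d}, nodeE d \notin (@nodeX d) @: T.
  move=> T; apply/imsetP => -[j _ Hj].
  by have := congr1 val Hj; rewrite /= /bump /=.
have inv' : Defs.invariant P V (S :&: AN_Y G).
  apply: Hm; [exact: Y_neq_E | exact: nY | exact: nE |].
  move=> [p Hp]; have := Hf _ _ _ (Y_neq_E d) (nY S) (nE S) invS; apply.
  by exists p; apply: dconn_transfer.
have [/eqP <-|neq] := boolP (S :&: AN_Y G == S); first exact: finset.subsetIr.
exfalso; apply: (minS (S :&: AN_Y G)) => //.
by rewrite finset.properEneq neq finset.subsetIl.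
Qed.

Theorem theorem2 (R : realType) (d : nat)
  (* population: distribution of (E, X, Y) *)
  (d0 : measure_display) (Omega0 : measurableType d0) (P : probability Omega0 R)
  (V : node d -> Omega0 -> R)
  (HV : forall v, measurable_fun setT (V v))
  (G : rel (node d)) (HG : is_DAG G) (HE : exogenousE G)
  (Hmarkov : markov_wrt P V G) (Hfaith : faithful_wrt P V G)
  (* data and decision rule *)
  (d1 : measure_display) (Omega : measurableType d1) (Q : probability Omega R)
  (phi : nat -> {set 'I_d} -> R -> Omega -> bool)
  (Hphi : forall n S a, measurable [set w | phi n S a w])
  (Hlevel : forall S, min_invariant P V S -> forall a : R, 0 < a < 1 ->
     (limn_esup (fun n => Q [set w | phi n S a w]) <= a%:E)%E)
  (Hpower : forall S : {set 'I_d}, ~ (exists2 S0, min_invariant P V S0 & S0 \subset S) ->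
     forall a : R, 0 < a < 1 ->
     (fun n => Q [set w | phi n S a w]) @ \oo --> 1%E)
  (alpha : R) (Halpha : 0 < alpha < 1) :
  (limn_einf (fun n => Q [set w | S_IAS_hat phi n alpha w \subset AN_Y G])
   >= limn_einf (fun n => Q [set w | S_IAS_hat phi n alpha w == S_IAS P V]))%E
  /\
  (limn_einf (fun n => Q [set w | S_IAS_hat phi n alpha w == S_IAS P V])
   >= (1 - alpha)%:E)%E.
Proof.
set a' := alpha / (2 ^+ d)%:R.
set N := #|{set 'I_d}|.
have N0 : (0 < N)%N by rewrite /N card_sets expn_gt0.
have NR : (1 <= (N%:R : R)) by rewrite ler1n.
have Ea' : a' = alpha / N%:R by rewrite /a' natN.
have a'0 : 0 < a' by rewrite Ea' divr_gt0 //; [case/andP: Halpha | lra].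
have a'1 : a' < 1.
  rewrite Ea' ltr_pdivrMr; last lra.
  case/andP: Halpha => h0 h1; nra.
have Hsub : S_IAS P V \subset AN_Y G.
  apply/fintype.subsetP => j; rewrite inE => /asboolP [S [mS jS]].
  exact: (fintype.subsetP (@minv_sub_AN _ _ _ P _ V G HE Hmarkov Hfaith S mS) _ jS).
pose g n w : {ffun {set 'I_d} -> bool} := [ffun S => phi n S a' w].
have mg : forall n S, measurable [set w | g n w S].
  move=> n S; rewrite (_ : [set w | g n w S] = [set w | phi n S a' w]) //.
  by apply/funext => w /=; rewrite ffunE.
pose If (f : {ffun {set 'I_d} -> bool}) := [set S : {set 'I_d} | ~~ f S]%SET.
pose Hat (f : {ffun {set 'I_d} -> bool}) := (\bigcup_(S in [set S in If f |
     [forall S' : {set 'I_d}, (S' \proper S) ==> (S' \notin If f)]]) S)%SET.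
have Heq : forall n w, S_IAS_hat phi n alpha w = Hat (g n w).
  move=> n w.
  have EI : I_hat phi n alpha w = If (g n w) by apply/setP => S; rewrite !inE ffunE.
  by rewrite /S_IAS_hat /MI_hat EI.
have mA : forall n, measurable [set w | S_IAS_hat phi n alpha w == S_IAS P V].
  move=> n; rewrite (_ : [set w | _] = [set w | (fun f => Hat f == S_IAS P V) (g n w)]).
    exact: (@meas_ffun _ _ _ (g n) (fun f => Hat f == S_IAS P V) (mg n)).
  by apply/funext => w /=; rewrite Heq.
have mB : forall n, measurable [set w | S_IAS_hat phi n alpha w \subset AN_Y G].
  move=> n; rewrite (_ : [set w | _] = [set w | (fun f => Hat f \subset AN_Y G) (g n w)]).
    exact: (@meas_ffun _ _ _ (g n) (fun f => Hat f \subset AN_Y G) (mg n)).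
  by apply/funext => w /=; rewrite Heq.
split.
  apply: einf_mono => n; apply: le_measure; rewrite ?inE; [exact: mA|exact: mB|].
  by move=> w /= /eqP ->.
pose nonSup (S : {set 'I_d}) := ~ (exists2 S0, min_invariant P V S0 & S0 \subset S).
pose E n (S : {set 'I_d}) : set Omega := [set w | (`[< min_invariant P V S >] && phi n S a' w)
   || (`[< nonSup S >] && ~~ phi n S a' w)].
have mE : forall n S, measurable (E n S).
  move=> n S; rewrite (_ : E n S = [set w | (fun f : {ffun {set 'I_d} -> bool} =>
     (`[< min_invariant P V S >] && f S) || (`[< nonSup S >] && ~~ f S)) (g n w)]).
    exact: (@meas_ffun _ _ _ (g n) (fun f : {ffun {set 'I_d} -> bool} =>
     (`[< min_invariant P V S >] && f S) || (`[< nonSup S >] && ~~ f S)) (mg n)).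
  by apply/funext => w /=; rewrite ffunE.
pose U n := \big[setU/set0]_(S : {set 'I_d}) E n S.
have mU : forall n, measurable (U n).
  by move=> n; apply: bigsetU_measurable => S _; exact: mE.
have EU : forall n S, E n S `<=` U n.
  by move=> n S; rewrite /U (bigD1 S) //=; exact: subsetUl.
have good : forall n w, ~ U n w -> S_IAS_hat phi n alpha w = S_IAS P V.
  move=> n w nU.
  have Hl : forall S, min_invariant P V S -> ~~ phi n S a' w.
    move=> S mS; apply/negP => ph; apply: nU; apply: (EU n S) => /=.
    by rewrite /E /= (asboolT mS) ph.
  have Hp : forall S, nonSup S -> phi n S a' w.
    move=> S nS; apply/negPn/negP => ph; apply: nU; apply: (EU n S) => /=.
    by rewrite /E /= (asboolT nS) ph orbT.
  have key : forall S, S \in MI_hat phi n alpha w <-> min_invariant P V S.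
    move=> S; rewrite /MI_hat /I_hat !inE; split.
      move=> /andP [HI /forallP Hmin].
      have [[S0 mS0 S0S]|ns] := pselect (exists2 S0, min_invariant P V S0 & S0 \subset S); last first.
        by have := Hp _ ns; rewrite (negbTE HI).
      have [/eqP <- //|neq] := boolP (S0 == S).
      have := Hmin S0; rewrite finset.properEneq neq S0S /= inE.
      by rewrite (Hl _ mS0).
    move=> mS; apply/andP; split; first exact: Hl.
    apply/forallP => S'; apply/implyP => pS'; rewrite inE negbK.
    have [[S0 mS0 S0S']|ns] := pselect (exists2 S0, min_invariant P V S0 & S0 \subset S'); last exact: Hp.
    exfalso; apply: (mS.2 S0); last exact: mS0.1.
    exact: fintype.sub_proper_trans S0S' pS'.
  apply/setP => j; rewrite /S_IAS_hat /S_IAS inE; apply/bigcupP/asboolP.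
    by move=> [S /key mS jS]; exists S.
  by move=> [S [mS jS]]; exists S => //; apply/key.
have a'01 : 0 < a' < 1 by rewrite a'0 a'1.
have ev : forall e, 0 < e -> \forall n \near \oo, forall S, (Q (E n S) <= (a' + e)%:E)%E.
  move=> e e0; apply: filter_forall => S.
  have [mS|nmS] := pselect (min_invariant P V S).
    have nS : ~ nonSup S by apply; exists S.
    have := esup_ev _ _ _ (Hlevel S mS a' a'01) e0; apply: filterS => n h.
    rewrite (_ : E n S = [set w | phi n S a' w]) //.
    by apply/funext => w; rewrite /E /= (asboolT mS) (asboolF nS) /= orbF.
  have [nS|nnS] := pselect (nonSup S).
    have := Hpower S nS a' a'01 => /fine_cvgP [Hfin Hcv].
    have Hge := cvgr_ge 1 Hcv (1 - e) ltac:(lra).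
    near=> n.
    rewrite (_ : E n S = ~` [set w | phi n S a' w]); last first.
      apply/funext => w; rewrite /E /= (asboolF nmS) (asboolT nS) /=.
      by apply/propext; split => /negP.
    rewrite probability_setC //.
    have fn : Q [set w | phi n S a' w] \is a fin_num by near: n.
    have gn : 1 - e <= fine (Q [set w | phi n S a' w]) by near: n.
    rewrite -(fineK fn) -EFinB lee_fin; lra.
  apply: nearW => n; rewrite (_ : E n S = set0) ?measure0 ?lee_fin; first lra.
  by apply/funext => w; rewrite /E /= (asboolF nmS) (asboolF nnS); apply/propext; split.
have NR0 : (0 : R) < N%:R by lra.
have lb : forall e, 0 < e ->
  ((1 - alpha - e)%:E <= limn_einf (fun n => Q [set w | S_IAS_hat phi n alpha w == S_IAS P V]))%E.
  move=> e e0; apply: einf_ge.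
  have e'0 : 0 < e / N%:R by rewrite divr_gt0.
  have := ev _ e'0; apply: filterS => n Hn.
  have h1 : ~` U n `<=` [set w | S_IAS_hat phi n alpha w == S_IAS P V].
    by move=> w /= nU; apply/eqP; exact: good.
  have hQ : (Q (~` U n) <= Q [set w | S_IAS_hat phi n alpha w == S_IAS P V])%E.
    by apply: le_measure; rewrite ?inE; [exact: measurableC| exact: mA| exact: h1].
  apply: le_trans hQ; rewrite probability_setC //.
  have hs : (Q (U n) <= (alpha + e)%:E)%E.
    apply: le_trans (@boole_seq _ _ _ Q _ _ (E n) (mE n)) _.
    apply: (@le_trans _ _ (\sum_(S : {set 'I_d}) ((a' + e / N%:R)%:E))%E); first by apply: lee_sum => S _; exact: Hn.
    rewrite sumEFin sumr_const -/N lee_fin -mulr_natl Ea'.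
    rewrite le_eqVlt; apply/orP; left; apply/eqP; field.
    by rewrite gt_eqF.
  have hpos : (0 <= Q (U n))%E by [].
  move: (Q (U n)) hs hpos => [r| |] //= hs hpos.
  by rewrite -EFinB lee_fin; rewrite lee_fin in hs hpos; lra.
move: (limn_einf _) lb => L lb.
case: L lb => [r| |] lb; last 2 first.
- by rewrite leey.
- by have := lb 1 ltr01; rewrite leeNy_eq.
rewrite lee_fin leNgt; apply/negP => hr.
have := lb ((1 - alpha - r) / 2) ltac:(lra); rewrite lee_fin; lra.
Unshelve. all: by end_near.
Qed.
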